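(* Let $\mathcal A_+,\mathcal A_-\subseteq\mathbb Z^n$ be disjoint finite sets with $\mathcal A=\mathcal A_+\cup\mathcal A_-$ full dimensional. If $\nabla_{>0}(\mathcal A_+,\mathcal A_-)\neq\varnothing$, then $\tau(\nabla_{\mathbb C}(\mathcal A))$ equals the Zariski closure of $\nabla_{>0}(\mathcal A_+,\mathcal A_-)$ in $\mathbb C^{\mathcal A}$.
   Context: For disjoint finite $\mathcal A_+,\mathcal A_-\subseteq\mathbb Z^n$, a signomial with signed support $(\mathcal A_+,\mathcal A_-)$ is $f_c(x)=\sum_{a\in\mathcal A_+}c_ax^a-\sum_{b\in\mathcal A_-}c_bx^b$ with $c\in\mathbb R^{\mathcal A}_{>0}$ (nonsigned coefficients). Its critical system is $F(c,x)=(f_c(x),x_1\partial_{x_1}f_c(x),\dots,x_n\partial_{x_n}f_c(x))$, and $\nabla_{>0}(\mathcal A_+,\mathcal A_-)=\{c\in\mathbb R^{\mathcal A}_{>0}:F(c,x)=0\text{ for some }x\in\mathbb R^n_{>0}\}$. $\mathcal A$ is full dimensional if $\dim\operatorname{conv}(\mathcal A)=n$. The $\mathcal A$-discriminant variety $\nabla_{\mathbb C}(\mathcal A)$ is the Zariski closure in $\mathbb C^{\mathcal A}$ of the set of $c\in\mathbb C^{\mathcal A}$ such that $\sum_{a\in\mathcal A}c_ax^a$ has a singular zero in $(\mathbb C^* )^n$, i.e. a point where it and all $x_i\partial_{x_i}$ of it vanish. Let $\sigma\in\{\pm1\}^{\mathcal A}$ with $\sigma_a=1$ for $a\in\mathcal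 A_+$, $\sigma_a=-1$ for $a\in\mathcal A_-$, and $\tau:\mathbb C^{\mathcal A}\to\mathbb C^{\mathcal A}$, $\tau(x)=(\sigma_ax_a)_a$. *)

(* Defs.v *)
From HB Require Import structures.
From mathcomp Require Import all_boot all_order all_algebra.
From mathcomp Require Import reals.
From mathcomp.real_closed Require Import complex.
From mathcomp Require mpoly.

Set Implicit Arguments.
Unset Strict Implicit.
Unset Printing Implicit Defensive.
Import Order.TTheory GRing.Theory Num.Theory.
Local Open Scope ring_scope.

Section Defs.
Variable R : realType.
Local Notation C := (R[i]).

(* Data: A = {a j | j < k} subset of Z^n (a injective), sign s j = true iff a j \in A_+ *)

Definition lmon (T : unitRingType) (n : nat) (x : 'I_n -> T) (a : 'I_n -> int) : T :=
  \prod_(i < n) (x i ^ (a i)).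

Definition sgn (T : pzRingType) (b : bool) : T := if b then 1 else -1.

Definition signomial (n k : nat) (a : 'I_k -> 'I_n -> int) (s : 'I_k -> bool)
  (c : 'I_k -> R) (x : 'I_n -> R) : R :=
  \sum_(j < k) sgn R (s j) * c j * lmon x (a j).

(* x_i d/dx_i f_c (x) ; for a Laurent monomial x_i d/dx_i x^a = a_i x^a *)
Definition signomial_toric_deriv (n k : nat) (a : 'I_k -> 'I_n -> int) (s : 'I_k -> bool)
  (c : 'I_k -> R) (x : 'I_n -> R) (i : 'I_n) : R :=
  \sum_(j < k) sgn R (s j) * c j * (a j i)%:~R * lmon x (a j).

Definition nabla_pos (n k : nat) (a : 'I_k -> 'I_n -> int) (s : 'I_k -> bool)
  (c : 'I_k -> R) : Prop :=
  (forall j, 0 < c j) /\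
  exists x : 'I_n -> R, (forall i, 0 < x i) /\
    signomial a s c x = 0 /\ (forall i, signomial_toric_deriv a s c x i = 0).

Definition cpoly_eval (n k : nat) (a : 'I_k -> 'I_n -> int) (c : 'I_k -> C)
  (x : 'I_n -> C) : C := \sum_(j < k) c j * lmon x (a j).

Definition cpoly_toric_deriv (n k : nat) (a : 'I_k -> 'I_n -> int) (c : 'I_k -> C)
  (x : 'I_n -> C) (i : 'I_n) : C := \sum_(j < k) c j * (a j i)%:~R * lmon x (a j).

Definition has_sing_zero (n k : nat) (a : 'I_k -> 'I_n -> int) (c : 'I_k -> C) : Prop :=
  exists x : 'I_n -> C, (forall i, x i != 0) /\
    cpoly_eval a c x = 0 /\ (forall i, cpoly_toric_deriv a c x i = 0).

Definition zariski_closure (k : nat) (S : ('I_k -> C) -> Prop) : ('I_k -> C) -> Prop :=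
  fun z => forall p : mpoly.mpoly k C,
    (forall y, S y -> mpoly.meval y p = 0) -> mpoly.meval z p = 0.

Definition disc_variety (n k : nat) (a : 'I_k -> 'I_n -> int) : ('I_k -> C) -> Prop :=
  zariski_closure (has_sing_zero a).

Definition tau (k : nat) (s : 'I_k -> bool) (z : 'I_k -> C) : 'I_k -> C :=
  fun j => sgn C (s j) * z j.

(* dim conv(A) = n : A nonempty and the differences a_j - a_j0 span R^n *)
Definition full_dim (n k : nat) (a : 'I_k -> 'I_n -> int) : Prop :=
  exists j0 : 'I_k,
    \rank (\matrix_(j < k, i < n) (((a j i - a j0 i)%:~R) : R)) = n.

End Defs.

(* Main.v *)
Require Import Defs.
From HB Require Import structures.
From mathcomp Require Import all_boot all_order all_algebra.
From mathcomp Require Import reals.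
From mathcomp.real_closed Require Import complex.
From mathcomp Require Import mpoly.
From mathcomp Require Import ring lra zify.
From Stdlib Require Import FunctionalExtensionality.
Set Implicit Arguments.
Unset Strict Implicit.
Unset Printing Implicit Defensive.
Import Order.TTheory GRing.Theory Num.Theory.
Local Open Scope ring_scope.

Section Lcl.
Variable F : fieldType.

Definition lcl (h : F -> F) := exists (P : {poly F}) (N : nat),
  forall z, z != 0 -> h z * z ^+ N = P.[z].

Lemma lcl_ext h1 h2 : (forall z, h1 z = h2 z) -> lcl h1 -> lcl h2.
Proof. by move=> E [P [N H]]; exists P, N => z nz; rewrite -E H. Qed.

Lemma lcl_const c : lcl (fun _ => c).
Proof. by exists c%:P, 0%N => z _; rewrite expr0 mulr1 hornerC. Qed.

Lemma lcl_id : lcl (fun z => z).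
Proof. by exists 'X, 0%N => z _; rewrite expr0 mulr1 hornerX. Qed.

Lemma lcl_add h1 h2 : lcl h1 -> lcl h2 -> lcl (fun z => h1 z + h2 z).
Proof.
move=> [P1 [N1 H1]] [P2 [N2 H2]].
exists (P1 * 'X^N2 + P2 * 'X^N1), (N1 + N2)%N => z nz.
rewrite hornerD !hornerM !hornerXn -H1 // -H2 // exprD; ring.
Qed.

Lemma lcl_mul h1 h2 : lcl h1 -> lcl h2 -> lcl (fun z => h1 z * h2 z).
Proof.
move=> [P1 [N1 H1]] [P2 [N2 H2]].
exists (P1 * P2), (N1 + N2)%N => z nz.
rewrite hornerM -H1 // -H2 // exprD; ring.
Qed.

Lemma lcl_sum (I : Type) (s : seq I) (h : I -> F -> F) :
  (forall i, lcl (h i)) -> lcl (fun z => \sum_(i <- s) h i z).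
Proof.
move=> Hh; elim: s => [|i s IH].
  by apply: lcl_ext (lcl_const 0) => z; rewrite big_nil.
by apply: lcl_ext (lcl_add (Hh i) IH) => z; rewrite big_cons.
Qed.

Lemma lcl_prod (I : Type) (s : seq I) (h : I -> F -> F) :
  (forall i, lcl (h i)) -> lcl (fun z => \prod_(i <- s) h i z).
Proof.
move=> Hh; elim: s => [|i s IH].
  by apply: lcl_ext (lcl_const 1) => z; rewrite big_nil.
by apply: lcl_ext (lcl_mul (Hh i) IH) => z; rewrite big_cons.
Qed.

Lemma lcl_exp h m : lcl h -> lcl (fun z => h z ^+ m).
Proof.
move=> Hh; elim: m => [|m IH].
  by apply: lcl_ext (lcl_const 1) => z; rewrite expr0.
by apply: lcl_ext (lcl_mul Hh IH) => z; rewrite exprS.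
Qed.

Lemma lcl_expz (e : int) : lcl (fun z => z ^ e).
Proof.
case: e => m.
  by apply: lcl_ext (lcl_exp m lcl_id) => z.
exists 1, m.+1 => z nz; rewrite hornerC NegzE -invr_expz mulVf //.
by rewrite expfz_neq0.
Qed.

Lemma lcl_zero h (f : nat -> F) : lcl h -> injective f ->
  (forall t, f t != 0) -> (forall t, h (f t) = 0) ->
  forall z, z != 0 -> h z = 0.
Proof.
move=> [P [N HP]] finj fnz fz z nz.
have P0 : P = 0.
  apply/eqP; apply/negPn/negP => Pn0.
  have := max_poly_roots Pn0 (rs := [seq f t | t <- iota 0 (size P)]).
  rewrite size_map size_iota ltnn => H; suff : false by []; apply: H.
    apply/allP => y /mapP [t _ ->]; apply/rootP.
    by rewrite -HP // fz mul0r.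
  by rewrite map_inj_uniq // iota_uniq.
have := HP z nz; rewrite P0 horner0 => /eqP.
by rewrite mulf_eq0 expf_eq0 (negPf nz) andbF orbF => /eqP.
Qed.

End Lcl.
Section LclM.
Variable F : fieldType.
Lemma lcl_meval k (p : mpoly.mpoly k F) (h : 'I_k -> F -> F) :
  (forall j, lcl (h j)) -> lcl (fun z => mpoly.meval (fun j => h j z) p).
Proof.
move=> Hh.
have H1 : lcl (fun z => \sum_(m <- mpoly.msupp p)
    (fun m z => mpoly.mcoeff m p * \prod_(i < k) h i z ^+ mpoly.fun_of_multinom m i) m z).
  apply: lcl_sum => m.
  apply: lcl_mul; first exact: lcl_const.
  apply: (lcl_prod (index_enum _)) => i; exact: lcl_exp.
by apply: lcl_ext H1 => z; rewrite mpoly.mevalE.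
Qed.
End LclM.

Local Open Scope complex_scope.

Section Helpers.
Variable R : realType.
Local Notation C := R[i].

Lemma sgn2 (T : pzRingType) b : sgn T b * sgn T b = 1.
Proof. by case: b; rewrite /sgn ?mulr1 ?mulrNN ?mulr1. Qed.

Lemma sgnC b : (sgn R b)%:C = sgn C b.
Proof. by case: b; rewrite /sgn ?rmorph1 ?rmorphN1. Qed.

Lemma lmon_nz (F : fieldType) n (x : 'I_n -> F) e : (forall i, x i != 0) -> lmon x e != 0.
Proof. by move=> nz; apply/prodf_neq0 => i _; rewrite expfz_neq0. Qed.

Lemma lmon_gt0 n (y : 'I_n -> R) e : (forall i, 0 < y i) -> 0 < lmon y e.
Proof. by move=> pos; apply: prodr_gt0 => i _; rewrite exprz_gt0. Qed.

Lemma lmon_C n (y : 'I_n -> R) e : lmon (fun i => (y i)%:C) e = (lmon y e)%:C.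
Proof. by rewrite /lmon rmorph_prod; apply: eq_bigr => i _; rewrite fmorphXz. Qed.

Lemma Re_sum (I : Type) (t : seq I) (G : I -> C) :
  complex.Re (\sum_(i <- t) G i) = \sum_(i <- t) complex.Re (G i).
Proof.
elim: t => [|i t IH]; first by rewrite !big_nil.
by rewrite !big_cons -IH; case: (G i); case: (\sum_(j <- t) G j).
Qed.

Lemma Im_sum (I : Type) (t : seq I) (G : I -> C) :
  complex.Im (\sum_(i <- t) G i) = \sum_(i <- t) complex.Im (G i).
Proof.
elim: t => [|i t IH]; first by rewrite !big_nil.
by rewrite !big_cons -IH; case: (G i); case: (\sum_(j <- t) G j).
Qed.

Lemma Re_mulR (z : C) (t : R) : complex.Re (z * t%:C) = complex.Re z * t.
Proof. by case: z => x y /=; rewrite mulr0 subr0. Qed.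

Lemma Im_mulR (z : C) (t : R) : complex.Im (z * t%:C) = complex.Im z * t.
Proof. by case: z => x y /=; rewrite mulr0 add0r. Qed.

End Helpers.

Section Main.
Variables (R : realType) (n k : nat) (a : 'I_k -> 'I_n -> int) (s : 'I_k -> bool).
Local Notation C := R[i].
Variables (c0 : 'I_k -> R) (x0 : 'I_n -> R).
Hypotheses (c0pos : forall j, 0 < c0 j) (x0pos : forall i, 0 < x0 i)
  (f0 : signomial a s c0 x0 = 0) (d0 : forall i, signomial_toric_deriv a s c0 x0 i = 0).
Variables (w : 'I_k -> C) (x1 : 'I_n -> C).
Hypotheses (x1nz : forall i, x1 i != 0) (f1 : cpoly_eval a w x1 = 0)
  (d1 : forall i, cpoly_toric_deriv a w x1 i = 0).

Definition v0 j := sgn R (s j) * c0 j * lmon x0 (a j).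
Definition dd j := w j * lmon x1 (a j) - (v0 j)%:C.
Definition r j := complex.Re (dd j).
Definition r' j := complex.Im (dd j).

Lemma kv0 : \sum_j v0 j = 0.
Proof. exact: f0. Qed.

Lemma kv0d i : \sum_j v0 j * (a j i)%:~R = 0.
Proof.
apply: etrans (d0 i); apply: eq_bigr => j _; rewrite /v0; ring.
Qed.

Lemma kd : \sum_j dd j = 0.
Proof.
rewrite /dd sumrB -rmorph_sum kv0 rmorph0 subr0; exact: f1.
Qed.

Lemma kdd i : \sum_j dd j * ((a j i)%:~R : R)%:C = 0.
Proof.
rewrite /dd.
under eq_bigr do rewrite mulrBl -rmorphM.
rewrite sumrB -rmorph_sum kv0d rmorph0 subr0; apply: etrans (d1 i).
apply: eq_bigr => j _; rewrite rmorph_int; ring.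
Qed.

Lemma kr : \sum_j r j = 0.
Proof. by rewrite /r -Re_sum kd. Qed.
Lemma kr' : \sum_j r' j = 0.
Proof. by rewrite /r' -Im_sum kd. Qed.
Lemma krd i : \sum_j r j * (a j i)%:~R = 0.
Proof.
rewrite /r; under eq_bigr do rewrite -Re_mulR.
by rewrite -Re_sum kdd.
Qed.
Lemma krd' i : \sum_j r' j * (a j i)%:~R = 0.
Proof.
rewrite /r'; under eq_bigr do rewrite -Im_mulR.
by rewrite -Im_sum kdd.
Qed.

Definition q j := c0 j * lmon x0 (a j).
Lemma q_gt0 j : 0 < q j.
Proof. by rewrite mulr_gt0 ?lmon_gt0. Qed.

Definition rho := (1 + \sum_j (`|r j| + `|r' j|) / q j)^-1.

Lemma sumt_ge0 : 0 <= \sum_j (`|r j| + `|r' j|) / q j.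
Proof.
by apply: sumr_ge0 => j _; rewrite divr_ge0 ?addr_ge0 // ltW ?q_gt0.
Qed.

Lemma rho_gt0 : 0 < rho.
Proof. by rewrite invr_gt0; have := sumt_ge0; lra. Qed.

Lemma rho_bound j : rho * (`|r j| + `|r' j|) < q j.
Proof.
have qj := q_gt0 j.
have tj : (`|r j| + `|r' j|) / q j <= \sum_j (`|r j| + `|r' j|) / q j.
  rewrite (bigD1 j) //= lerDl; apply: sumr_ge0 => i _.
  by rewrite divr_ge0 ?addr_ge0 // ltW ?q_gt0.
set t := (`|r j| + `|r' j|) / q j in tj.
set S := \sum_j _ in tj.
have St : 0 <= S := sumt_ge0.
have -> : `|r j| + `|r' j| = t * q j by rewrite /t mulfVK // gt_eqF.
rewrite /rho -/S mulrA gtr_pMl // mulrC ltr_pdivrMr; lra.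
Qed.


Lemma pos_ok (l m : R) j : `|l| <= rho -> `|m| <= rho ->
  0 < sgn R (s j) * (v0 j + l * r j + m * r' j).
Proof.
move=> hl hm.
have hb := rho_bound j.
have hsv : sgn R (s j) * v0 j = q j by rewrite /v0 /q !mulrA sgn2 mul1r.
have hs : `|sgn R (s j)| = 1 by case: (s j); rewrite /sgn ?normrN normr1.
have h1 : `|l * r j + m * r' j| <= rho * (`|r j| + `|r' j|).
  apply: le_trans (ler_normD _ _) _; rewrite !normrM mulrDr.
  by apply: lerD; apply: ler_wpM2r.
have h2 : `|sgn R (s j) * (l * r j + m * r' j)| <= rho * (`|r j| + `|r' j|).
  by rewrite normrM hs mul1r.
have h3 := ler_norm (- (sgn R (s j) * (l * r j + m * r' j))).
rewrite normrN in h3.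
rewrite -addrA mulrDr hsv; lra.
Qed.

Definition V (l m : C) j : C := (v0 j)%:C + l * (r j)%:C + m * (r' j)%:C.

Variable p : mpoly.mpoly k C.
Hypothesis Hp : forall c, nabla_pos a s c -> mpoly.meval (fun j => (c j)%:C) p = 0.

Definition H (l m : C) (x : 'I_n -> C) :=
  mpoly.meval (fun j => sgn C (s j) * V l m j * (lmon x (a j))^-1) p.

Lemma stage0 (l m : R) (y : 'I_n -> R) : `|l| <= rho -> `|m| <= rho ->
  (forall i, 0 < y i) -> H l%:C m%:C (fun i => (y i)%:C) = 0.
Proof.
move=> hl hm ypos.
pose cr j := sgn R (s j) * (v0 j + l * r j + m * r' j) * (lmon y (a j))^-1.
have Lnz j : lmon y (a j) != 0 by rewrite gt_eqF ?lmon_gt0.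
have ncr : nabla_pos a s cr.
  split=> [j|]; first by rewrite mulr_gt0 ?invr_gt0 ?lmon_gt0 ?pos_ok.
  exists y; split=> //; split.
    rewrite /signomial.
    have -> : \sum_(j < k) sgn R (s j) * cr j * lmon y (a j) =
      \sum_j v0 j + l * \sum_j r j + m * \sum_j r' j.
      rewrite !mulr_sumr -!big_split /=; apply: eq_bigr => j _.
      by rewrite /cr !mulrA sgn2 mul1r divfK.
    by rewrite kv0 kr kr' !mulr0 !addr0.
  move=> i; rewrite /signomial_toric_deriv.
  have -> : \sum_(j < k) sgn R (s j) * cr j * (a j i)%:~R * lmon y (a j) =
    \sum_j v0 j * (a j i)%:~R + l * \sum_j r j * (a j i)%:~R
      + m * \sum_j r' j * (a j i)%:~R.
    rewrite !mulr_sumr -!big_split /=; apply: eq_bigr => j _.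
    rewrite /cr !mulrA sgn2 mul1r.
    have e : forall z : R, z * (lmon y (a j))^-1 * (a j i)%:~R * lmon y (a j)
       = z * (a j i)%:~R by move=> z; rewrite mulrAC divfK.
    by rewrite e !mulrDl.
  by rewrite (kv0d i) (krd i) (krd' i) !mulr0 !addr0.
rewrite -(Hp ncr) /H; apply: mpoly.meval_eq => j.
by rewrite /cr lmon_C /V !rmorphM /= fmorphV sgnC !rmorphD /= !rmorphM /= sgnC.
Qed.


Definition gC (t : nat) : C := (rho / t.+1%:R)%:C.

Lemma g_gt0 t : 0 < rho / t.+1%:R.
Proof. by rewrite divr_gt0 ?rho_gt0 ?ltr0Sn. Qed.

Lemma g_le t : `|rho / t.+1%:R| <= rho.
Proof.
rewrite ger0_norm; last exact: ltW (g_gt0 t).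
rewrite ler_pdivrMr ?ltr0Sn //.
have h1 : (1:R) <= t.+1%:R by rewrite ler1n.
have := rho_gt0; nra.
Qed.

Lemma gC_nz t : gC t != 0.
Proof.
apply/eqP => /(congr1 (@complex.Re R)) /= /eqP; by rewrite gt_eqF ?g_gt0.
Qed.

Lemma gC_inj : injective gC.
Proof.
move=> t u /(congr1 (@complex.Re R)) /= /(mulfI (lt0r_neq0 rho_gt0)) /invr_inj /eqP.
by rewrite eqr_nat eqSS => /eqP.
Qed.


Lemma lcl_invlmon (x : 'I_n -> C) (i0 : 'I_n) (e : 'I_n -> int) :
  lcl (fun z => (lmon (fun i => if i == i0 then z else x i) e)^-1).
Proof.
have h : lcl (fun z => \prod_(i <- index_enum 'I_n)
   (fun i z => (if i == i0 then z else x i) ^ (- e i)) i z).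
  apply: lcl_prod => i /=; case: (i == i0); first exact: lcl_expz.
  exact: lcl_const.
apply: lcl_ext h => z /=.
rewrite /lmon -prodfV; apply: eq_bigr => i _; by rewrite invr_expz.
Qed.

Lemma stageA (l m : R) : `|l| <= rho -> `|m| <= rho ->
  forall x, (forall i, x i != 0) -> H l%:C m%:C x = 0.
Proof.
move=> hl hm.
suff hs : forall rr : nat, forall x, (forall i, x i != 0) ->
    (forall i : 'I_n, (rr <= i)%N -> exists y, 0 < y /\ x i = y%:C) ->
    H l%:C m%:C x = 0.
  by move=> x xnz; apply: (hs n) => // i; rewrite leqNgt ltn_ord.
elim=> [|rr IH] x xnz hx.
  pose yy i := complex.Re (x i).
  have ex : x = (fun i => (yy i)%:C).
    apply: FunctionalExtensionality.functional_extensionality => i.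
    by case: (hx i (leq0n _)) => y [_ e]; rewrite /yy e.
  rewrite ex; apply: stage0 => // i.
  by case: (hx i (leq0n _)) => y [yp e]; rewrite /yy e.
case: (ltnP rr n) => [lt|ge]; last first.
  apply: IH => // i ri; apply: hx.
  by have := ltn_ord i; move: ri ge; clear; lia.
pose i0 := Ordinal lt.
pose upd z := fun i => if i == i0 then z else x i.
have hg : lcl (fun z => H l%:C m%:C (upd z)).
  apply: (lcl_ext (h1 := fun z => mpoly.meval
     (fun j => (fun j z => sgn C (s j) * V l%:C m%:C j * (lmon (upd z) (a j))^-1) j z) p)) => //.
  apply: lcl_meval => j; apply: lcl_mul; first exact: lcl_const.
  exact: lcl_invlmon.
have := lcl_zero hg gC_inj gC_nz.
have eu : upd (x i0) = x.
  apply: FunctionalExtensionality.functional_extensionality => i.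
  by rewrite /upd; case: eqP => // ->.
move=> hz; rewrite -[in LHS]eu; apply: hz; last exact: xnz.
move=> t; apply: IH.
  by move=> i; rewrite /upd; case: (i == i0) => //; exact: gC_nz.
move=> i ri; rewrite /upd; case: eqP => [_|ne].
  by exists (rho / t.+1%:R); split => //; exact: g_gt0.
apply: hx; rewrite ltn_neqAle ri andbT; apply/eqP => e.
by apply: ne; apply: val_inj.
Qed.


Lemma stageB (m : R) : `|m| <= rho ->
  forall x, (forall i, x i != 0) -> H 1 m%:C x = 0.
Proof.
move=> hm x xnz.
have hg : lcl (fun z => H z m%:C x).
  apply: (lcl_ext (h1 := fun z => mpoly.meval
     (fun j => (fun j z => sgn C (s j) * ((v0 j)%:C + z * (r j)%:C + m%:C * (r' j)%:C)
        * (lmon x (a j))^-1) j z) p)) => //.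
  apply: lcl_meval => j; apply: lcl_mul; last exact: lcl_const.
  apply: lcl_mul; first exact: lcl_const.
  apply: lcl_add; last exact: lcl_const.
  apply: lcl_add; first exact: lcl_const.
  apply: lcl_mul; [exact: lcl_id | exact: lcl_const].
apply: (lcl_zero hg gC_inj gC_nz); last exact: oner_neq0.
by move=> t; apply: stageA => //; exact: g_le.
Qed.

Lemma i_nz : 'i%C != 0 :> C.
Proof. by apply/eqP => /(congr1 (@complex.Im R)) /= /eqP; rewrite oner_eq0. Qed.

Lemma stageC x : (forall i, x i != 0) -> H 1 'i%C x = 0.
Proof.
move=> xnz.
have hg : lcl (fun z => H 1 z x).
  apply: (lcl_ext (h1 := fun z => mpoly.meval
     (fun j => (fun j z => sgn C (s j) * ((v0 j)%:C + 1 * (r j)%:C + z * (r' j)%:C)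
        * (lmon x (a j))^-1) j z) p)) => //.
  apply: lcl_meval => j; apply: lcl_mul; last exact: lcl_const.
  apply: lcl_mul; first exact: lcl_const.
  apply: lcl_add; first exact: lcl_const.
  apply: lcl_mul; [exact: lcl_id | exact: lcl_const].
apply: (lcl_zero hg gC_inj gC_nz); last exact: i_nz.
by move=> t; apply: stageB => //; exact: g_le.
Qed.

Lemma main_vanish : mpoly.meval (tau s w) p = 0.
Proof.
rewrite -(stageC x1nz) /H; apply: mpoly.meval_eq => j.
have e : V 1 'i%C j = w j * lmon x1 (a j).
  rewrite /V mul1r /r /r' -addrA -complexE /dd; ring.
by rewrite /tau e mulrA mulfK // lmon_nz.
Qed.

End Main.

Definition tlq (R : realType) k (s : 'I_k -> bool) : k.-tuple (mpoly.mpoly k R[i]) :=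
  [tuple sgn R[i] (s j) *: (mpoly.mpolyX R[i] (mpoly.mnm1 j) : mpoly.mpoly k R[i]) | j < k].

Lemma tau_meval (R : realType) k (s : 'I_k -> bool) (p : mpoly.mpoly k R[i]) v :
  mpoly.meval v ((p \mPo (@tlq R k s))) = mpoly.meval (Defs.tau s v) p.
Proof.
rewrite mpoly.comp_mpoly_meval; apply: mpoly.meval_eq => j.
by rewrite /tlq tnth_mktuple mpoly.mevalZ mpoly.mevalXU.
Qed.

Theorem proposition2p6 (R : realType) (n k : nat)
  (a : 'I_k -> 'I_n -> int) (s : 'I_k -> bool) :
  injective a ->
  full_dim R a ->
  (exists c : 'I_k -> R, nabla_pos a s c) ->
  forall z : 'I_k -> R[i],
    (exists w, disc_variety a w /\ z = Defs.tau s w) <->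
    zariski_closure
      (fun y : 'I_k -> R[i] =>
         exists c : 'I_k -> R, nabla_pos a s c /\ y = (fun j => (c j)%:C)) z.
Proof.
move=> _ _ [c0 [c0pos [x0 [x0pos [f0 d0]]]]] z; split.
  move=> [w0 [hw ->]] p hp.
  rewrite -tau_meval; apply: hw => y [x1 [x1nz [f1 d1]]].
  rewrite tau_meval; apply: (main_vanish c0pos x0pos f0 d0 x1nz f1 d1).
  by move=> c hc; apply: hp; exists c.
move=> hz; exists (Defs.tau s z); split; last first.
  apply: functional_extensionality => j.
  by rewrite /Defs.tau mulrA sgn2 mul1r.
move=> p hp; rewrite -tau_meval; apply: hz => y [c [[cpos [x [xpos [f d]]]] ->]].
rewrite tau_meval; apply: hp.
exists (fun i => (x i)%:C); split.
  by move=> i; apply/eqP => /(congr1 (@complex.Re R)) /= /eqP; rewrite gt_eqF.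
split.
  apply: etrans (_ : (signomial a s c x)%:C = _); last by rewrite f.
  rewrite /cpoly_eval /signomial rmorph_sum.
  apply: eq_bigr => j _; rewrite lmon_C /Defs.tau !rmorphM /= sgnC.
  by [].
move=> i; apply: etrans (_ : (signomial_toric_deriv a s c x i)%:C = _); last by rewrite d.
rewrite /cpoly_toric_deriv /signomial_toric_deriv rmorph_sum.
apply: eq_bigr => j _; rewrite lmon_C /Defs.tau !rmorphM /= sgnC rmorph_int.
by [].
Qed.
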